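(* Let $n=m=1$ (scalars $A\neq0$, $B\neq0$, $Q,R>0$) in the setting of the context, assume $q<q_c$, and let $\beta\in(0,1)$. If $$N_q>\frac{\log(2/\beta)A^4B^4P^4(R+B^2P)^2}{[Q(R+B^2P)^2+(1-q)RA^2B^2P^2]^2},$$ where $P>0$ solves $P=Q+A^2P-(1-q)(R+B^2P)^{-1}A^2B^2P^2$, then with probability at least $1-\beta$ (over the samples) the following holds: if $\hat q<q_c$, then $\hat K$ mean-square stabilizes the system.
   Context: Consider the scalar system $x_{t+1}=Ax_t+\lambda_tBu_t$, $t\ge0$, with $(A,B)$ stabilizable, $x_0$ random with finite mean and variance and $\{\lambda_t\}$ i.i.d. Bernoulli, independent of $x_0$, with $\mathcal{P}(\lambda_t=0)=q$, $q\in(0,1)$ unknown. The estimate is $\hat q=\frac1{N_q}\sum_{i=1}^{N_q}(1-\lambda_i)$ from $N_q$ i.i.d. samples with the same Bernoulli law. For $p\in[0,1)$ the modified Riccati equation with parameter $p$ is $X=Q+A^2X-(1-p)(R+B^2X)^{-1}A^2B^2X^2$; $q_c$ is the critical loss probability such that for every $p\in[0,q_c)$ this equation has a unique positive solution. For $\hat q\in[0,q_c)$ let $\hat P$ be the positive solution for parameter $\hat q$ and $\hat K=-(R+B^2\hat P)^{-1}AB\hat P$. $\hat K$ mean-square stabilizes the system if the closed loop $x_{t+1}=(A+\lambda_tB\hat K)x_t$ satisfies $\lim_{t\to\infty}\mathbb{E}\{x_t^2\}=0$. *)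

(* Defs.v *)
From HB Require Import structures.
From mathcomp Require Import all_boot all_order all_algebra.
From mathcomp Require Import all_classical all_reals all_analysis.
Set Implicit Arguments. Unset Strict Implicit. Unset Printing Implicit Defensive.
Import Order.TTheory GRing.Theory Num.Theory.
Import numFieldNormedType.Exports.
Local Open Scope classical_set_scope.
Local Open Scope ring_scope.

Section Defs.
Variable R : realType.

Definition mare_pos_sol (A B Q Rw p X : R) : Prop :=
  0 < X /\
  X = Q + A ^+ 2 * X - (1 - p) * (Rw + B ^+ 2 * X)^-1 * A ^+ 2 * B ^+ 2 * X ^+ 2.

Definition mare_unique_below (A B Q Rw qc : R) : Prop :=
  forall p : R, 0 <= p -> p < qc -> p < 1 -> exists! X : R, mare_pos_sol A B Q Rw p X.

Definition critical_loss_prob (A B Q Rw qc : R) : Prop :=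
  0 < qc <= 1 /\ mare_unique_below A B Q Rw qc /\
  (forall qc' : R, 0 < qc' <= 1 -> mare_unique_below A B Q Rw qc' -> qc' <= qc).

Definition lqr_gain (A B Rw P : R) : R := - ((Rw + B ^+ 2 * P)^-1 * A * B * P).

(* Bernoulli law of one lambda: P(lambda = 0) = q (false), P(lambda = 1) = 1 - q (true) *)
Definition bern_weight (q : R) (b : bool) : R := if b then 1 - q else q.

Definition seq_weight (q : R) (n : nat) (s : {ffun 'I_n -> bool}) : R :=
  \prod_(i < n) bern_weight q (s i).

Definition q_hat (N : nat) (s : {ffun 'I_N -> bool}) : R :=
  (N%:R)^-1 * \sum_(i < N) (1 - (s i)%:R).

Definition cl_traj (A B K x0 : R) (lams : seq bool) : R :=
  foldl (fun x (l : bool) => (A + l%:R * B * K) * x) x0 lams.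

(* E{x_t^2}: expectation under the joint law of x_0 ~ mu and independent
   i.i.d. lambda_0..lambda_{t-1} with P(lambda_i = 0) = q *)
Definition ms_second_moment (mu : probability R R) (q A B K : R) (t : nat) : \bar R :=
  (\int[mu]_x (\sum_(s : {ffun 'I_t -> bool})
        seq_weight q s * (cl_traj A B K x [seq s i | i <- enum 'I_t]) ^+ 2)%:E)%E.

Definition ms_stabilizes (mu : probability R R) (q A B K : R) : Prop :=
  (ms_second_moment mu q A B K) @ \oo --> (0%E : \bar R).

Definition sample_prob (q : R) (N : nat) (E : {ffun 'I_N -> bool} -> Prop) : R :=
  \sum_(s : {ffun 'I_N -> bool} | `[< E s >]) seq_weight q s.

End Defs.

(* Main.v *)
Require Import Defs.
From HB Require Import structures.
From mathcomp Require Import all_boot all_order all_algebra.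
From mathcomp Require Import all_classical all_reals all_analysis.
From mathcomp Require Import ring lra.
Import Order.TTheory GRing.Theory Num.Theory.
Import numFieldNormedType.Exports.
Local Open Scope classical_set_scope.
Local Open Scope ring_scope.
Lemma foldl_prod (R : realType) (A B K x : R) (lams : seq bool) :
  foldl (fun x (l : bool) => (A + l%:R * B * K) * x) x lams =
  x * \prod_(l <- lams) (A + l%:R * B * K).
Proof.
elim: lams x => [|l ls IH] x /=; first by rewrite big_nil mulr1.
by rewrite IH big_cons mulrA [x * _]mulrC.
Qed.

Lemma sum_traj (R : realType) (q A B K x : R) (t : nat) :
  \sum_(s : {ffun 'I_t -> bool})
     seq_weight q s * (cl_traj A B K x [seq s i | i <- enum 'I_t]) ^+ 2
  = x ^+ 2 * (q * A ^+ 2 + (1 - q) * (A + B * K) ^+ 2) ^+ t.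
Proof.
rewrite (eq_bigr (fun s : {ffun 'I_t -> bool} =>
   x ^+ 2 * \prod_(i < t) (bern_weight q (s i) * (A + (s i)%:R * B * K) ^+ 2))); last first.
  move=> s _; rewrite /cl_traj foldl_prod big_map big_enum /= /seq_weight.
  rewrite big_split /= exprMn prodrXl; ring.
rewrite -mulr_sumr; congr (_ * _).
rewrite -(bigA_distr_bigA (fun (i : 'I_t) (b : bool) =>
   bern_weight q b * (A + b%:R * B * K) ^+ 2)) /=.
rewrite prodr_const card_ord; congr (_ ^+ _).
rewrite big_bool /= /bern_weight; ring.
Qed.
Lemma ms_moment_eq (R : realType) (mu : probability R R) (q A B K : R) :
  mu.-integrable setT (fun x : R => (x ^+ 2)%:E) ->
  (forall t, ms_second_moment mu q A B K t =
     ((\int[mu]_x (x ^+ 2)%:E) * ((q * A ^+ 2 + (1 - q) * (A + B * K) ^+ 2) ^+ t)%:E)%E).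
Proof.
move=> hint t; rewrite /ms_second_moment.
rewrite -(integralZr measurableT hint).
apply: eq_integral => x _.
by rewrite sum_traj EFinM.
Qed.
Lemma ms_stab_of (R : realType) (mu : probability R R) (q A B K : R) :
  mu.-integrable setT (fun x : R => (x ^+ 2)%:E) ->
  0 <= q * A ^+ 2 + (1 - q) * (A + B * K) ^+ 2 < 1 ->
  (forall t, ms_second_moment mu q A B K t =
     ((\int[mu]_x (x ^+ 2)%:E) * ((q * A ^+ 2 + (1 - q) * (A + B * K) ^+ 2) ^+ t)%:E)%E) ->
  ms_stabilizes mu q A B K.
Proof.
move=> hint /andP[r0 r1] hE.
have hfin : (\int[mu]_x (x ^+ 2)%:E)%E \is a fin_num.
  exact: (integrable_fin_num measurableT hint).
rewrite /ms_stabilizes.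
set r := q * A ^+ 2 + (1 - q) * (A + B * K) ^+ 2.
set c := fine (\int[mu]_x (x ^+ 2)%:E)%E.
have -> : ms_second_moment mu q A B K = fun t => (geometric c r t)%:E.
  by apply/funext => t; rewrite hE /geometric /= EFinM /c fineK.
apply: cvg_EFin; first by near=> t.
apply: cvg_geometric; rewrite ger0_norm //.
Unshelve. all: by end_near. Qed.
Lemma mare_div {R : realType} (a b Q Rw p X : R) : 0 < b -> 0 < Rw -> 0 < X ->
  X = Q + a * X - (1 - p) * (Rw + b * X)^-1 * a * b * X ^+ 2 ->
  Q / X = 1 - a * (p + (1 - p) * (Rw / (Rw + b * X))).
Proof.
move=> b0 R0 X0 HX.
have hD : Rw + b * X != 0 by rewrite gt_eqF // addr_gt0 // mulr_gt0.
have HQ : Q = X - a * X + (1 - p) * (Rw + b * X)^-1 * a * b * X ^+ 2.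
  by rewrite {1}HX; ring.
rewrite HQ; field; apply/andP; split => //; exact: lt0r_neq0.
Qed.

Lemma det_stab (R : realType) (A B Q Rw q qh Ph P : R) :
  A != 0 -> B != 0 -> 0 < Q -> 0 < Rw -> 0 < q < 1 ->
  mare_pos_sol A B Q Rw qh Ph -> mare_pos_sol A B Q Rw q P ->
  q - qh < (Q * (Rw + B ^+ 2 * P) ^+ 2 + (1 - q) * Rw * A ^+ 2 * B ^+ 2 * P ^+ 2) /
           (A ^+ 2 * B ^+ 2 * P ^+ 2 * (Rw + B ^+ 2 * P)) ->
  0 <= q * A ^+ 2 + (1 - q) * (A + B * lqr_gain A B Rw Ph) ^+ 2 < 1.
Proof.
move=> A0 B0 Q0 R0 /andP[q0 q1] [Ph0 HPh] [P0 HP] Heps.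
have a0 : 0 < A ^+ 2 by rewrite exprn_even_gt0.
have b0 : 0 < B ^+ 2 by rewrite exprn_even_gt0.
move: HPh HP Heps.
set a := A ^+ 2; set b := B ^+ 2 => HPh HP Heps.
have Dh0 : 0 < Rw + b * Ph by rewrite addr_gt0 // mulr_gt0.
have D0 : 0 < Rw + b * P by rewrite addr_gt0 // mulr_gt0.
set s' := Rw / (Rw + b * Ph).
set s := Rw / (Rw + b * P).
have E1 := @mare_div _ a b Q Rw qh Ph b0 R0 Ph0 HPh; rewrite -/s' in E1.
have E2 := @mare_div _ a b Q Rw q P b0 R0 P0 HP; rewrite -/s in E2.
have hK : A + B * lqr_gain A B Rw Ph = A * s'.
  rewrite /lqr_gain /s' /b; field; exact: lt0r_neq0.
rewrite hK exprMn -/a.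
have s'0 : 0 < s' by rewrite divr_gt0.
have s'1 : 1 - s' = b * Ph / (Rw + b * Ph).
  rewrite /s'; field; exact: lt0r_neq0.
have s'1p : 0 < 1 - s' by rewrite s'1 divr_gt0 // mulr_gt0.
have s0 : 0 < s by rewrite divr_gt0.
have s1 : 1 - s = b * P / (Rw + b * P).
  rewrite /s; field; exact: lt0r_neq0.
have s1p : 0 < 1 - s by rewrite s1 divr_gt0 // mulr_gt0.
apply/andP; split.
  apply: addr_ge0; first by rewrite mulr_ge0 // ltW.
  apply: mulr_ge0; first by rewrite subr_ge0 ltW.
  apply: mulr_ge0; [exact: ltW | exact: sqr_ge0].
have key : 1 - (q * a + (1 - q) * (a * s' ^+ 2)) =
           Q / Ph + a * (1 - s') * ((1 - q) * s' - (q - qh)).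
  rewrite E1; ring.
suff : 0 < Q / Ph + a * (1 - s') * ((1 - q) * s' - (q - qh)) by lra.
have QPh : 0 < Q / Ph by rewrite divr_gt0.
case: (leP q qh) => hq.
  apply: ltr_pwDl => //; apply: mulr_ge0; first by rewrite mulr_ge0 // ltW.
  have : 0 <= (1 - q) * s' by rewrite mulr_ge0 // ltW // subr_gt0.
  lra.
have hPP : Ph <= P.
  rewrite leNgt; apply/negP => hlt.
  have hss : s' <= s.
    rewrite /s' /s ler_pdivrMr // mulrAC ler_pdivlMr // ler_pM2l //.
    by rewrite lerD2l ler_pM2l // ltW.
  have hQ : Q / Ph < Q / P by rewrite ltr_pM2l // ltf_pV2 // posrE.
  have h1 : qh + (1 - qh) * s' <= q + (1 - q) * s.
    have -> : qh + (1 - qh) * s' = s' + qh * (1 - s') by ring.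
    have : qh * (1 - s') <= q * (1 - s') by rewrite ler_pM2r // ltW.
    have : (1 - q) * s' <= (1 - q) * s by rewrite ler_pM2l // subr_gt0.
    lra.
  have : a * (qh + (1 - qh) * s') <= a * (q + (1 - q) * s) by rewrite ler_pM2l.
  lra.
set G := Q / (a * Ph * (1 - s')) + (1 - q) * s'.
have hG : Q / Ph + a * (1 - s') * ((1 - q) * s' - (q - qh)) =
          a * (1 - s') * (G - (q - qh)).
  rewrite /G; field; rewrite !lt0r_neq0 //.
have heps : (Q * (Rw + b * P) ^+ 2 + (1 - q) * Rw * a * b * P ^+ 2) /
           (a * b * P ^+ 2 * (Rw + b * P)) = Q / (a * P * (1 - s)) + (1 - q) * s.
  rewrite s1 /s; field; rewrite !lt0r_neq0 //.
rewrite heps in Heps.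
rewrite hG; apply: mulr_gt0; first by rewrite mulr_gt0.
have hss : s <= s'.
  rewrite /s' /s ler_pdivrMr // mulrAC ler_pdivlMr // ler_pM2l //.
  by rewrite lerD2l ler_pM2l.
have hG1 : Q / (a * P * (1 - s)) <= Q / (a * Ph * (1 - s')).
  rewrite s1 s'1.
  have -> : Q / (a * P * (b * P / (Rw + b * P))) = Q / a * (Rw / P ^+ 2 + b / P) / b.
    field; rewrite !lt0r_neq0 //.
  have -> : Q / (a * Ph * (b * Ph / (Rw + b * Ph))) = Q / a * (Rw / Ph ^+ 2 + b / Ph) / b.
    field; rewrite !lt0r_neq0 //.
  rewrite ler_pM2r ?invr_gt0 // ler_pM2l ?divr_gt0 //.
  apply: lerD.
    rewrite ler_pM2l // lef_pV2 ?posrE ?exprn_gt0 //.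
    by rewrite ler_pXn2r // nnegrE ltW.
  by rewrite ler_pM2l // lef_pV2 ?posrE.
have : (1 - q) * s <= (1 - q) * s' by rewrite ler_pM2l // subr_gt0.
rewrite /G; lra.
Qed.
Lemma expR_upper {R : realType} (y : R) : y < 2 -> expR y <= ((1 - y / 2) ^+ 2)^-1.
Proof.
move=> hy.
have h0 : 0 < 1 - y / 2 by lra.
have -> : expR y = ((expR (- (y / 2))) ^+ 2)^-1.
  have -> : (expR (- (y / 2))) ^+ 2 = expR (- y).
    by rewrite -expRM_natr; congr expR; field.
  by rewrite expRN invrK.
rewrite lef_pV2 ?posrE ?exprn_gt0 ?expR_gt0 //.
rewrite ler_pXn2r ?nnegrE; last 2 first. exact: ltW. exact: ltW (expR_gt0 _).
  by have := expR_ge1Dx (- (y / 2)).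
by [].
Qed.

Lemma exp_base {R : realType} {q e : R} : 0 < q -> q < 1 -> 0 <= e ->
  expR (2 * e * (q - e)) * (1 - q + q * expR (- (2 * e))) <= expR (- (e ^+ 2)).
Proof.
move=> q0 q1 e0.
set y := e * (2 * q - e); set z := e * (2 * (1 - q) + e).
have ey : expR (- (e ^+ 2)) * expR y = expR (2 * e * (q - e)).
  by rewrite -expRD /y; congr expR; ring.
have ez : expR (- (e ^+ 2)) * expR (- z) = expR (2 * e * (q - e)) * expR (- (2 * e)).
  by rewrite -!expRD /z; congr expR; ring.
have -> : expR (2 * e * (q - e)) * (1 - q + q * expR (- (2 * e))) =
          expR (- (e ^+ 2)) * ((1 - q) * expR y + q * expR (- z)).
  by rewrite [RHS]mulrDr !(mulrCA (expR (- (e ^+ 2)))) ey ez; ring.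
rewrite ger_pMr ?expR_gt0 //.
have hyq : y <= q ^+ 2.
  rewrite -subr_ge0 (_ : q ^+ 2 - y = (q - e) ^+ 2) ?sqr_ge0 // /y; ring.
have q2 : q ^+ 2 < 1 by rewrite expr_lt1 // ltW.
have y1 : 0 < 1 - y / 2 by lra.
have hy := @expR_upper R y ltac:(lra).
have z0 : 0 <= z by rewrite /y /z mulr_ge0 //; lra.
have hz := @expR_upper R (- z) ltac:(lra).
set V := (1 - y / 2) ^+ 2 in hy; set U := (1 - - z / 2) ^+ 2 in hz.
have V0 : 0 < V by apply: exprn_gt0.
have U0 : 0 < U by apply: exprn_gt0; lra.
apply: (le_trans (y := (1 - q) * V^-1 + q * U^-1)).
  apply: lerD; rewrite ler_pM2l //; lra.
have -> : (1 - q) * V^-1 + q * U^-1 = ((1 - q) * U + q * V) / (U * V).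
  field; rewrite !lt0r_neq0 //.
rewrite ler_pdivrMr ?mulr_gt0 // ?mul1r.
have hVc : 0 <= V - (1 - q).
  have h1 : 1 - q ^+ 2 / 2 <= 1 - y / 2 by lra.
  have h2 : 0 <= 1 - q ^+ 2 / 2 by nra.
  have : (1 - q ^+ 2 / 2) ^+ 2 <= V by rewrite /V ler_pXn2r // nnegrE; lra.
  have : 0 <= q * (1 - q) + q ^+ 4 / 4 by rewrite addr_ge0 ?mulr_ge0 ?divr_ge0 ?exprn_ge0 //; lra.
  have -> : (1 - q ^+ 2 / 2) ^+ 2 = 1 - q + (q * (1 - q) + q ^+ 4 / 4) by field.
  lra.
have iden : U * V - ((1 - q) * U + q * V) =
   e ^+ 2 * (1 - 2 * (1 - q) - e) ^+ 2 + ((1 - q) + z) * y ^+ 2 / 4 + z ^+ 2 / 4 * (V - (1 - q)).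
  by rewrite /U /V /y /z; field.
have t1 : 0 <= e ^+ 2 * (1 - 2 * (1 - q) - e) ^+ 2 by rewrite mulr_ge0 ?sqr_ge0.
have t2 : 0 <= (1 - q + z) * y ^+ 2 / 4.
  by rewrite divr_ge0 // mulr_ge0 ?sqr_ge0 //; lra.
have t3 : 0 <= z ^+ 2 / 4 * (V - (1 - q)) by rewrite mulr_ge0 // divr_ge0 ?sqr_ge0.
lra.
all: lra.
Qed.

Lemma sum_prod_ffun {R : realType} (N : nat) (F : bool -> R) :
  \sum_(s : {ffun 'I_N -> bool}) \prod_(i < N) F (s i) = (F true + F false) ^+ N.
Proof.
rewrite -(bigA_distr_bigA (fun (i : 'I_N) (b : bool) => F b)) /=.
by rewrite prodr_const card_ord big_bool.
Qed.

Lemma total_weight {R : realType} (q : R) (N : nat) :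
  \sum_(s : {ffun 'I_N -> bool}) seq_weight q s = 1.
Proof.
rewrite /seq_weight (sum_prod_ffun N (bern_weight q)) /bern_weight.
by rewrite subrK expr1n.
Qed.

Lemma tail_bound {R : realType} (q eps : R) (N : nat) (P : pred {ffun 'I_N -> bool}) :
  0 < q -> q < 1 -> 0 <= eps -> (0 < N)%N ->
  (forall s, P s -> @q_hat R N s <= q - eps) ->
  \sum_(s | P s) seq_weight q s <= expR (- (N%:R * eps ^+ 2)).
Proof.
move=> q0 q1 e0 N0 HP.
set g := fun b : bool => expR (- (2 * eps) * (1 - b%:R)).
set C := expR (2 * eps * N%:R * (q - eps)).
have N0' : 0 < N%:R :> R by rewrite ltr0n.
apply: (le_trans (y := \sum_(s : {ffun 'I_N -> bool})
          C * \prod_(i < N) (bern_weight q (s i) * g (s i)))).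
  rewrite big_mkcond /=; apply: ler_sum => s _.
  have hF : 0 <= C * \prod_(i < N) (bern_weight q (s i) * g (s i)).
    apply: mulr_ge0; first exact: ltW (expR_gt0 _).
    apply: prodr_ge0 => i _; apply: mulr_ge0; last exact: ltW (expR_gt0 _).
    by rewrite /bern_weight; case: (s i); lra.
  case: ifP => Ps //.
  have hk := HP s Ps.
  set k := \sum_(i < N) (1 - (s i)%:R : R).
  have hqk : @q_hat R N s = N%:R^-1 * k by [].
  rewrite big_split /= -/(seq_weight q s).
  have -> : \prod_(i < N) g (s i) = expR (- (2 * eps) * k).
    by rewrite /k mulr_sumr expR_sum.
  rewrite mulrCA -[X in X <= _]mulr1 ler_pM2l; last first.
    rewrite /seq_weight; apply: prodr_gt0 => i _.
    by rewrite /bern_weight; case: (s i); lra.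
  rewrite /C -expRD.
  have hk' : k <= N%:R * (q - eps).
    rewrite -ler_pdivrMl // -[_^-1 * k]/(@q_hat R N s) //.
  have hx : 0 <= 2 * eps * N%:R * (q - eps) + - (2 * eps) * k.
    have -> : 2 * eps * N%:R * (q - eps) + - (2 * eps) * k = (2 * eps) * (N%:R * (q - eps) - k) by ring.
    by apply: mulr_ge0; lra.
  apply: le_trans (expR_ge1Dx _); lra.
rewrite -mulr_sumr (sum_prod_ffun N (fun b => bern_weight q b * g b)) /=.
rewrite /g /bern_weight /= subrr mulr0 expR0 mulr1 subr0 mulr1.
have -> : C = expR (2 * eps * (q - eps)) ^+ N.
  by rewrite /C -expRM_natr; congr expR; ring.
rewrite -exprMn.
have -> : expR (- (N%:R * eps ^+ 2)) = expR (- (eps ^+ 2)) ^+ N.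
  by rewrite -expRM_natr; congr expR; ring.
rewrite lerXn2r ?nnegrE.
- by [].
- apply: mulr_ge0; first exact: ltW (expR_gt0 _).
  have := expR_gt0 (- (2 * eps)); nra.
- exact: ltW (expR_gt0 _).
- exact: (exp_base q0 q1 e0).
Qed.

Theorem mainTheorem10 (R : realType) (A B Q Rw q qc beta P : R) (N : nat)
    (mu : probability R R) :
  A != 0 -> B != 0 -> 0 < Q -> 0 < Rw ->
  0 < q < 1 ->
  critical_loss_prob A B Q Rw qc ->
  q < qc ->
  mu.-integrable setT (fun x : R => (x ^+ 2)%:E) ->
  0 < beta < 1 ->
  mare_pos_sol A B Q Rw q P ->
  N%:R > ln (2 / beta) * A ^+ 4 * B ^+ 4 * P ^+ 4 * (Rw + B ^+ 2 * P) ^+ 2 /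
         (Q * (Rw + B ^+ 2 * P) ^+ 2 + (1 - q) * Rw * A ^+ 2 * B ^+ 2 * P ^+ 2) ^+ 2 ->
  sample_prob q (fun s : {ffun 'I_N -> bool} =>
     (@q_hat R N s) < qc ->
     forall Phat : R, mare_pos_sol A B Q Rw ((@q_hat R N s)) Phat ->
       ms_stabilizes mu q A B (lqr_gain A B Rw Phat))
  >= 1 - beta.
Proof.
move=> A0 B0 Q0 R0 /andP[q0 q1] _ _ hint /andP[be0 be1] hP hN.
have P0 : 0 < P by case: hP.
have a0 : 0 < A ^+ 2 by rewrite exprn_even_gt0.
have b0 : 0 < B ^+ 2 by rewrite exprn_even_gt0.
have D0 : 0 < Rw + B ^+ 2 * P by rewrite addr_gt0 // mulr_gt0.
set eps := (Q * (Rw + B ^+ 2 * P) ^+ 2 + (1 - q) * Rw * A ^+ 2 * B ^+ 2 * P ^+ 2) /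
           (A ^+ 2 * B ^+ 2 * P ^+ 2 * (Rw + B ^+ 2 * P)).
have num0 : 0 < Q * (Rw + B ^+ 2 * P) ^+ 2 + (1 - q) * Rw * A ^+ 2 * B ^+ 2 * P ^+ 2.
  have t1 : 0 < Q * (Rw + B ^+ 2 * P) ^+ 2 by rewrite mulr_gt0 // exprn_gt0.
  have t2 : 0 <= (1 - q) * Rw * A ^+ 2 * B ^+ 2 * P ^+ 2.
    have : 0 <= 1 - q by lra.
    move=> h1; apply: mulr_ge0; last exact: sqr_ge0.
    apply: mulr_ge0; last exact: sqr_ge0.
    apply: mulr_ge0; last exact: sqr_ge0.
    by apply: mulr_ge0 => //; exact: ltW.
  lra.
have p2 : 0 < P ^+ 2 by apply: exprn_gt0.
have den0 : 0 < A ^+ 2 * B ^+ 2 * P ^+ 2 * (Rw + B ^+ 2 * P).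
  by apply: mulr_gt0 => //; apply: mulr_gt0 => //; apply: mulr_gt0.
have eps0 : 0 < eps.
  by rewrite /eps divr_gt0.
have hl0 : 0 < ln (2 / beta).
  by rewrite ln_gt0 // ltr_pdivlMr // mul1r; lra.
have hN' : ln (2 / beta) < N%:R * eps ^+ 2.
  have e : ln (2 / beta) * A ^+ 4 * B ^+ 4 * P ^+ 4 * (Rw + B ^+ 2 * P) ^+ 2 /
         (Q * (Rw + B ^+ 2 * P) ^+ 2 + (1 - q) * Rw * A ^+ 2 * B ^+ 2 * P ^+ 2) ^+ 2
         = ln (2 / beta) / eps ^+ 2.
    rewrite /eps; field.
    by rewrite A0 B0 !lt0r_neq0.
  by move: hN; rewrite e ltr_pdivrMr // exprn_gt0.
have Npos : (0 < N)%N.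
  case: N hN' {hN} => [|n] //; rewrite mul0r; lra.
set E := fun s : {ffun 'I_N -> bool} => _.
have hgood : forall s : {ffun 'I_N -> bool}, q - @q_hat R N s < eps -> E s.
  move=> s hs _ Ph hPh.
  apply: (@ms_stab_of R mu q A B _ hint _ (@ms_moment_eq R mu q A B _ hint)).
  have hq : 0 < q < 1 by rewrite q0 q1.
  exact: (@det_stab R A B Q Rw q (@q_hat R N s) Ph P A0 B0 Q0 R0 hq hPh hP hs).
have htot := total_weight q N.
rewrite (bigID (fun s => `[< E s >])) /= in htot.
have htail : \sum_(s | ~~ `[< E s >]) seq_weight q s <= expR (- (N%:R * eps ^+ 2)).
  apply: tail_bound => //; first exact: ltW.
  move=> s /asboolPn hE; rewrite leNgt; apply/negP => h; apply: hE; apply: hgood; lra.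
have hexp : expR (- (N%:R * eps ^+ 2)) < beta.
  have : expR (- (N%:R * eps ^+ 2)) < expR (- ln (2 / beta)) by rewrite ltr_expR; lra.
  have : expR (- ln (2 / beta)) = beta / 2.
    rewrite expRN lnK ?posrE ?divr_gt0 //; field; exact: lt0r_neq0.
  lra.
rewrite /sample_prob -/E.
lra.
Qed.
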